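(* Let $\mathfrak L=\mathbb V\oplus\mathbb W$ be a color gLt-algebra admitting a quasi-multiplicative basis $\mathfrak B=\{e_i\}_{i\in I}$ of $\mathbb W\neq 0$, and let $\phi$ be the associated map defined in the context. Let $J\subset I\,\dot\cup\,\overline I$ with $J=\overline J$, let $X\in\mathfrak I^{\,n-1}\,\dot\cup\,\overline{\mathfrak I}^{\,n-1}$ and $i\in I$. The following are equivalent: (1) $i\in\phi(J,X)$; (2) either $\phi(\{i\},\overline X)\cap J\cap I\neq\emptyset$ or $\phi(\{\overline i\},X)\cap J\cap I\neq\emptyset$.
   Context: Let $\mathbb F$ be a field, $\mathbb G$ an abelian group, $n\ge 2$, and $\epsilon:\mathbb G\times\mathbb G\to\mathbb F\setminus\{0\}$ a bicharacter ($\epsilon(k,g+h)=\epsilon(k,g)\epsilon(k,h)$, $\epsilon(g+h,k)=\epsilon(g,k)\epsilon(h,k)$, $\epsilon(g,h)\epsilon(h,g)=1$). A graded $n$-ary algebra is a $\mathbb G$-graded vector space $\mathfrak L=\bigoplus_{g\in\mathbb G}\mathfrak L_g$ with an $n$-linear map $\langle\cdot,\dots,\cdot\rangle:\mathfrak L^n\to\mathfrak L$ such that $\langle\mathfrak L_{g_1},\dots,\mathfrak L_{g_n}\rangle\subset\mathfrak L_{g_1+\dots+g_n}$. For $\sigma\in\mathbb S_n$ write $\langle x_1,\dots,x_n\rangle_\sigma:=\langle x_{\sigma(1)},\dots,x_{\sigma(n)}\rangle$; for subsets $A_1,\dots,A_n$, $\langle A_1,\dots,A_n\rangle_\sigma$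 denotes the linear span of all $\langle x_1,\dots,x_n\rangle_\sigma$ with $x_r\in A_r$. A color gLt-algebra is a graded $n$-ary algebra satisfying, for each $k=1,\dots,n$ and fixed scalars $\alpha^{\sigma_1,\sigma_2}_{i,j,k}\in\mathbb F$, the color version (each term on the right multiplied by the product of values of $\epsilon$ on the degrees of the homogeneous arguments transposed in passing from the left-hand order to the order of that term) of the identity $\langle y_1,\dots,y_{k-1},\langle x_1,\dots,x_n\rangle,y_k,\dots,y_{n-1}\rangle=\sum_{1\le i,j\le n,\,\sigma_1\in\mathbb S_n,\,\sigma_2\in\mathbb S_{n-1}}\alpha^{\sigma_1,\sigma_2}_{i,j,k}\langle x_{\sigma_1(1)},\dots,x_{\sigma_1(i-1)},\langle y_{\sigma_2(1)},\dots,y_{\sigma_2(j-1)},x_{\sigma_1(i)},y_{\sigma_2(j)},\dots,y_{\sigma_2(n-1)}\rangle,x_{\sigma_1(i+1)},\dots,x_{\sigma_1(n)}\rangle$. $\mathfrak L$ admits a quasi-multiplicative basis if $\mathfrak L=\mathbb V\oplus\mathbb W$ with $\mathbb V$, $\mathbb W\ne0$ graded subspaces and $\mathfrak B=\{e_i\}_{i\in I}$ a basis of homogeneous elements of $\mathbb W$ such that: (1) for $i_1,\dots,i_n\in I$, either $\langle e_{i_1},\dots,e_{i_n}\rangle\in\mathbb Fe_j$ for some $j\in I$ or $\langle e_{i_1},\dots,e_{i_n}\rangle\in\mathbb V$; (2) for $0<k<n$, $i_1,\dots,i_k\in I$ and $\sigma\in\mathbb S_n$, $\langle e_{i_1},\dots,e_{i_k},\mathbb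 V,\dots,\mathbb V\rangle_\sigma\subset\mathbb Fe_{j_\sigma}$ for some $j_\sigma\in I$; (3) either $\langle\mathbb V,\dots,\mathbb V\rangle\subset\mathbb Fe_j$ for some $j\in I$ or $\langle\mathbb V,\dots,\mathbb V\rangle\subset\mathbb V$. Index maps: let $v$ be a symbol not in $I$, $\mathfrak I:=I\,\dot\cup\,\{v\}$; for each $j\in\mathfrak I$ take a new symbol $\overline j$, $\overline I:=\{\overline i:i\in I\}$, $\overline{\mathfrak I}:=\overline I\,\dot\cup\,\{\overline v\}$; set $\overline{(\overline j)}:=j$, $\overline J:=\{\overline j:j\in J\}$ for a set $J$ of symbols ($\overline\emptyset=\emptyset$), and $\overline X:=(\overline a_2,\dots,\overline a_n)$ for a tuple $X=(a_2,\dots,a_n)$. Put $u_j:=e_j$ for $j\in I$ and $u_v:=\mathbb V$. For $\sigma\in\mathbb S_n$ and $(j_1,\dots,j_n)\in\mathfrak I^n$ let $a_\sigma(j_1,\dots,j_n)=\{r\}$ if $r\in I$ and $0\ne\langle u_{j_1},\dots,u_{j_n}\rangle_\sigma\subset\mathbb Fe_r$, $=\{v\}$ if $0\ne\langle u_{j_1},\dots,u_{j_n}\rangle_\sigma\subset\mathbb V$, and $=\emptyset$ otherwise. For $j,j_2,\dots,j_n\in\mathfrak I$ let $b_\sigma(j,\overline j_2,\dots,\overline j_n):=\{x\in\mathfrak I: a_\sigma(x,j_2,\dots,j_n)=\{j\}\}$. Define $\mu$ on $(\mathfrak I\,\dot\cup\,\overline{\mathfrak I})\times(\mathfrak I^{n-1}\,\dot\cup\,\overline{\mathfrak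 I}^{n-1})$ with values subsets of $\mathfrak I$ by: $\mu(j,j_1,\dots,j_{n-1})=\bigcup_{\sigma\in\mathbb S_n}a_\sigma(j,j_1,\dots,j_{n-1})$ for $j,j_1,\dots,j_{n-1}\in\mathfrak I$; $\mu(j,\overline j_1,\dots,\overline j_{n-1})=\bigcup_{\sigma\in\mathbb S_n}b_\sigma(j,\overline j_1,\dots,\overline j_{n-1})$ for $j,j_1,\dots,j_{n-1}\in\mathfrak I$; $\mu(\overline j,j_1,\dots,j_{n-1})=\bigcup_{1\le k\le n-1,\ \sigma\in\mathbb S_n}b_\sigma(j_k,\overline j,\overline j_1,\dots,\overline j_{k-1},\overline j_{k+1},\dots,\overline j_{n-1})$ for $j,j_1,\dots,j_{n-1}\in\mathfrak I$; and $\mu(\overline j,\overline j_1,\dots,\overline j_{n-1})=\emptyset$. Define $\phi$ on pairs $(J,X)$ with $J\subset I\,\dot\cup\,\overline I$ and $X\in\mathfrak I^{n-1}\,\dot\cup\,\overline{\mathfrak I}^{n-1}$ by $\phi(\emptyset,X)=\emptyset$ and, for $J\ne\emptyset$, $\phi(J,X):=K\cup\overline K$ where $K:=\big(\bigcup_{j\in J}\mu(j,X)\big)\setminus\{v\}$. *)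

(* Defs.v *)
From HB Require Import structures.
From mathcomp Require Import all_boot all_order all_algebra all_fingroup.
From mathcomp Require Export boolp classical_sets.
Set Implicit Arguments. Unset Strict Implicit. Unset Printing Implicit Defensive.
Import GRing.Theory.
Local Open Scope ring_scope.
Local Open Scope classical_set_scope.

Definition is_subspace (F : fieldType) (L : lmodType F) (S : set L) : Prop :=
  S 0 /\ forall (a : F) (x y : L), S x -> S y -> S (a *: x + y).

Definition lspan (F : fieldType) (L : lmodType F) (A : set L) : set L :=
  [set z | exists (m : nat) (c : 'I_m -> F) (w : 'I_m -> L),
      (forall t, A (w t)) /\ z = \sum_(t < m) c t *: w t].

Definition line (F : fieldType) (L : lmodType F) (x : L) : set L :=
  [set c *: x | c in [set: F]].

Definition lin_indep (F : fieldType) (L : lmodType F) (I : eqType) (e : I -> L) :=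
  forall (s : seq I) (c : I -> F), uniq s ->
    \sum_(i <- s) c i *: e i = 0 -> forall i, i \in s -> c i = 0.

Definition is_basis_of (F : fieldType) (L : lmodType F) (I : eqType)
  (e : I -> L) (W : set L) :=
  lin_indep e /\ W = lspan (range e).

Definition homogeneous_decomp (F : fieldType) (G : zmodType) (L : lmodType F)
  (Lg : G -> set L) (S : set L) (x : L) :=
  exists (s : seq G) (c : G -> L), uniq s /\
    (forall g, g \in s -> Lg g (c g) /\ S (c g)) /\ x = \sum_(g <- s) c g.

Definition graded_space (F : fieldType) (G : zmodType) (L : lmodType F)
  (Lg : G -> set L) :=
  (forall g, is_subspace (Lg g)) /\
  (forall x, homogeneous_decomp Lg setT x) /\
  (forall (s : seq G) (c : G -> L), uniq s -> (forall g, g \in s -> Lg g (c g)) ->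
     \sum_(g <- s) c g = 0 -> forall g, g \in s -> c g = 0).

Definition graded_subspace (F : fieldType) (G : zmodType) (L : lmodType F)
  (Lg : G -> set L) (S : set L) :=
  is_subspace S /\ forall x, S x -> homogeneous_decomp Lg S x.

Definition bicharacter (F : fieldType) (G : zmodType) (eps : G -> G -> F) :=
  (forall g h, eps g h != 0) /\
  (forall k g h, eps k (g + h) = eps k g * eps k h) /\
  (forall g h k, eps (g + h) k = eps g k * eps h k) /\
  (forall g h, eps g h * eps h g = 1).

Definition upd (n : nat) (T : Type) (f : {ffun 'I_n -> T}) (k : 'I_n) (x : T) :
  {ffun 'I_n -> T} := [ffun p => if p == k then x else f p].

Definition multilinear (F : fieldType) (L : lmodType F) (n : nat)
  (mult : {ffun 'I_n -> L} -> L) :=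
  forall (f : {ffun 'I_n -> L}) (k : 'I_n) (a : F) (x y : L),
    mult (upd f k (a *: x + y)) = a *: mult (upd f k x) + mult (upd f k y).

Definition graded_nary (F : fieldType) (G : zmodType) (L : lmodType F) (n : nat)
  (Lg : G -> set L) (mult : {ffun 'I_n -> L} -> L) :=
  graded_space Lg /\ multilinear mult /\
  forall (f : {ffun 'I_n -> L}) (g : 'I_n -> G),
    (forall p, Lg (g p) (f p)) -> Lg (\sum_(p < n) g p) (mult f).

(* a permutation of 'I_m applied to a natural number (identity outside [0,m)) *)
Definition papp (m : nat) (s : {perm 'I_m}) (p : nat) : nat :=
  match (insub p : option 'I_m) with Some o => nat_of_ord (s o) | None => p end.

Definition insert_at (T : Type) (k : nat) (z : T) (y : nat -> T) : nat -> T :=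
  fun p => if (p < k)%N then y p else if p == k then z else y p.-1.

Definition color_sign (F : fieldType) (G : zmodType) (eps : G -> G -> F)
  (T : eqType) (deg : T -> G) (s t : seq T) : F :=
  \prod_(a <- s) \prod_(b <- s | (index a s < index b s)%N && (index b t < index a t)%N)
     eps (deg a) (deg b).

(* labels: inl q = x_q, inr s = y_s (0-based) *)
Definition lhs_order (n k : nat) : seq (nat + nat) :=
  [seq @inr nat nat s | s <- iota 0 k] ++ [seq @inl nat nat q | q <- iota 0 n] ++
  [seq @inr nat nat s | s <- iota k (n.-1 - k)].

Definition rhs_order (n i j : nat) (s1 : 'S_n) (s2 : {perm 'I_n.-1}) : seq (nat + nat) :=
  [seq @inl nat nat (papp s1 q) | q <- iota 0 i] ++
  [seq @inr nat nat (papp s2 s) | s <- iota 0 j] ++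
  [:: @inl nat nat (papp s1 i)] ++
  [seq @inr nat nat (papp s2 s) | s <- iota j (n.-1 - j)] ++
  [seq @inl nat nat (papp s1 q) | q <- iota i.+1 (n - i.+1)].

(* < y_0, ..., y_{k-1}, <x_0, ..., x_{n-1}>, y_k, ..., y_{n-2} > *)
Definition lhs_term (L : Type) (n : nat) (mult : {ffun 'I_n -> L} -> L) (k : nat)
  (x y : nat -> L) : L :=
  mult [ffun p : 'I_n => insert_at k (mult [ffun q : 'I_n => x (nat_of_ord q)]) y p].

(* < x_{s1 0}, .., x_{s1 (i-1)}, < y_{s2 0}, .., y_{s2 (j-1)}, x_{s1 i},
      y_{s2 j}, .. >, x_{s1 (i+1)}, .. > *)
Definition rhs_term (L : Type) (n : nat) (mult : {ffun 'I_n -> L} -> L)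
  (i j : 'I_n) (s1 : 'S_n) (s2 : {perm 'I_n.-1}) (x y : nat -> L) : L :=
  mult [ffun p : 'I_n => if p == i then
          mult [ffun q : 'I_n =>
                  insert_at j (x (papp s1 i)) (fun s => y (papp s2 s)) q]
        else x (papp s1 p)].

Definition color_gLt (F : fieldType) (G : zmodType) (eps : G -> G -> F) (n : nat)
  (L : lmodType F) (Lg : G -> set L) (mult : {ffun 'I_n -> L} -> L) :=
  graded_nary Lg mult /\
  exists alpha : 'I_n -> 'I_n -> 'I_n -> 'S_n -> {perm 'I_n.-1} -> F,
  forall (k : 'I_n) (x y : nat -> L) (gx gy : nat -> G),
    (forall q, (q < n)%N -> Lg (gx q) (x q)) ->
    (forall s, (s < n.-1)%N -> Lg (gy s) (y s)) ->
    lhs_term mult k x y =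
      \sum_(i < n) \sum_(j < n) \sum_(s1 : 'S_n) \sum_(s2 : {perm 'I_n.-1})
        (alpha i j k s1 s2 *
         color_sign eps (fun l => match l with inl q => gx q | inr s => gy s end)
                    (lhs_order n k) (rhs_order i j s1 s2))
        *: rhs_term mult i j s1 s2 x y.

Definition prod_span (F : fieldType) (L : lmodType F) (n : nat)
  (mult : {ffun 'I_n -> L} -> L) (A : 'I_n -> set L) (s : 'S_n) : set L :=
  lspan [set mult [ffun p => x (s p)] | x in [set x : 'I_n -> L | forall r, A r (x r)]].

Definition quasi_mult_basis (F : fieldType) (G : zmodType) (L : lmodType F)
  (n : nat) (Lg : G -> set L) (mult : {ffun 'I_n -> L} -> L)
  (V W : set L) (I : eqType) (e : I -> L) :=
  [/\ graded_subspace Lg V /\ graded_subspace Lg W,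
      V <> [set 0] /\ W <> [set 0],
      (forall x, exists v w, V v /\ W w /\ x = v + w) /\
      (forall x, V x -> W x -> x = 0),
      is_basis_of e W /\ (forall i, exists g, Lg g (e i)) &
      [/\
        (forall ids : 'I_n -> I,
           (exists j, line (e j) (mult [ffun p => e (ids p)])) \/
           V (mult [ffun p => e (ids p)])),
        (forall k : nat, (0 < k < n)%N -> forall (ids : 'I_n -> I) (s : 'S_n),
           exists j, prod_span mult
             (fun r : 'I_n => if (r < k)%N then [set e (ids r)] else V) s
             `<=` line (e j)) &
        (exists j, prod_span mult (fun _ => V) 1%g `<=` line (e j)) \/
        prod_span mult (fun _ => V) 1%g `<=` V]].

Inductive bsym (A : Type) := Unb of A | Bar of A.
Arguments Unb {A}. Arguments Bar {A}.

Definition bbar (A : Type) (x : bsym A) : bsym A :=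
  match x with Unb a => Bar a | Bar a => Unb a end.

Definition bmap (A B : Type) (f : A -> B) (x : bsym A) : bsym B :=
  match x with Unb a => Unb (f a) | Bar a => Bar (f a) end.

(* \mathfrak I = I \dot\cup {v}, modelled as option I with None = v;
   u_j = e_j (as the singleton {e_j}) and u_v = V *)
Definition u_of (L : Type) (I : Type) (V : set L) (e : I -> L) (j : option I) : set L :=
  match j with Some i => [set e i] | None => V end.

Definition a_sig (F : fieldType) (L : lmodType F) (n : nat)
  (mult : {ffun 'I_n -> L} -> L) (V : set L) (I : eqType) (e : I -> L)
  (s : 'S_n) (js : seq (option I)) : set (option I) :=
  [set r | prod_span mult (fun p : 'I_n => u_of V e (nth None js p)) s <> [set 0] /\
           prod_span mult (fun p : 'I_n => u_of V e (nth None js p)) s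
             `<=` match r with Some r' => line (e r') | None => V end].

Definition b_sig (F : fieldType) (L : lmodType F) (n : nat)
  (mult : {ffun 'I_n -> L} -> L) (V : set L) (I : eqType) (e : I -> L)
  (s : 'S_n) (j : option I) (rest : seq (option I)) : set (option I) :=
  [set x | a_sig mult V e s (x :: rest) = [set j]].

Definition mu (F : fieldType) (L : lmodType F) (n : nat)
  (mult : {ffun 'I_n -> L} -> L) (V : set L) (I : eqType) (e : I -> L)
  (j : bsym (option I)) (X : bsym ((n.-1).-tuple (option I))) : set (option I) :=
  match j, X with
  | Unb j, Unb js => [set x | exists s : 'S_n, a_sig mult V e s (j :: js) x]
  | Unb j, Bar js => [set x | exists s : 'S_n, b_sig mult V e s j js x]
  | Bar j, Unb js => [set x | exists (k : 'I_n.-1) (s : 'S_n),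
                       b_sig mult V e s (tnth js k) (j :: (take k js ++ drop k.+1 js)) x]
  | Bar _, Bar _ => set0
  end.

(* phi(J, X) = K \cup \bar K, K = (\bigcup_{j in J} mu(j, X)) \ {v} *)
Definition phi (F : fieldType) (L : lmodType F) (n : nat)
  (mult : {ffun 'I_n -> L} -> L) (V : set L) (I : eqType) (e : I -> L)
  (J : set (bsym I)) (X : bsym ((n.-1).-tuple (option I))) : set (bsym I) :=
  let K := [set i : I | exists j, J j /\ mu mult V e (bmap Some j) X (Some i)] in
  [set y | match y with Unb i => K i | Bar i => K i end].
Arguments bbar {A}. Arguments bmap {A B}.

(* Main.v *)
Require Import Defs.
From HB Require Import structures.
From mathcomp Require Import all_boot all_order all_algebra all_fingroup.
From mathcomp Require Import boolp classical_sets.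
Set Implicit Arguments. Unset Strict Implicit. Unset Printing Implicit Defensive.
Local Open Scope ring_scope.
Local Open Scope classical_set_scope.
Import GRing.Theory.

Lemma ne0P (T : Type) (A : set T) : A <> set0 <-> exists x, A x.
Proof.
split.
- move=> H; apply: contrapT => H'; apply: H; apply/seteqP; split => x // Ax.
  by apply: H'; exists x.
- by case=> x Ax E; rewrite E in Ax.
Qed.

Lemma lspan0 (F : fieldType) (L : lmodType F) (A : set L) : lspan A 0.
Proof.
exists 0%N, (fun _ => 0), (fun _ => 0); split; first by case.
by rewrite big_ord0.
Qed.

Lemma a_uniq (F : fieldType) (L : lmodType F) (n : nat)
  (mult : {ffun 'I_n -> L} -> L) (V W : set L) (I : eqType) (e : I -> L) :
  lin_indep e -> W = lspan (range e) -> (forall x, V x -> W x -> x = 0) ->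
  forall s js r1 r2, a_sig mult V e s js r1 -> a_sig mult V e s js r2 -> r1 = r2.
Proof.
move=> LI HW VW s js r1 r2 [ne1 s1] [_ s2].
set P := prod_span _ _ _ in ne1 s1 s2.
have [z [Pz z0]] : exists z, P z /\ z != 0.
  apply: contrapT => H; apply: ne1; apply/seteqP; split => x.
    move=> Px; apply/eqP; apply: contrapT => nx; apply: H; exists x; split=> //.
    by apply/negP.
  by move=> ->; apply: lspan0.
have Wl : forall a c, W (c *: e a).
  move=> a c; rewrite HW; exists 1%N, (fun _ => c), (fun _ => e a); split.
    by move=> _; exists a.
  by rewrite big_ord1.
have key : forall a r, line (e a) z -> (match r with Some r' => line (e r') | None => V end) z -> Some a = r.
  move=> a [b|] [c _ zc].
    case=> d _ zd; case: (eqVneq a b) => [->//|ab].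
    have U : uniq [:: a; b] by rewrite /= inE ab.
    have S0 : \sum_(x <- [:: a; b]) (if x == a then c else - d) *: e x = 0.
      by rewrite big_cons big_seq1 eqxx eq_sym (negbTE ab) scaleNr zc zd subrr.
    have := LI _ _ U S0 a; rewrite mem_head eqxx => /(_ isT) c0.
    by move: z0; rewrite -zc c0 scale0r eqxx.
  move=> Vz; move: z0; rewrite (VW z Vz) ?eqxx //.
  by rewrite -zc; apply: Wl.
move: (s1 z Pz) (s2 z Pz); clear s1 s2.
case: r1 => [a|]; case: r2 => [b|] //=.
- by move=> h1 h2; apply: key.
- by move=> h1 h2; apply: key.
- by move=> h1 h2; apply: esym; apply: key.
Qed.

Lemma prod_span_perm (F : fieldType) (L : lmodType F) (n : nat)
  (mult : {ffun 'I_n -> L} -> L) (A : 'I_n -> set L) (s : 'S_n) (x y : 'I_n) :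
  prod_span mult A s = prod_span mult (A \o tperm x y) (s * tperm x y)%g.
Proof.
rewrite /prod_span; congr lspan; apply/seteqP; split => _ [f Hf <-].
- exists (f \o tperm x y) => /=.
    by move=> r; apply: Hf.
  congr mult; apply/ffunP => p; rewrite !ffunE /= permM tpermK //.
- exists (f \o tperm x y) => /=.
    by move=> r; have := Hf (tperm x y r); rewrite /= tpermK.
  congr mult; apply/ffunP => p; rewrite !ffunE /= permM //.
Qed.

Lemma a_swap (F : fieldType) (L : lmodType F) (n : nat)
  (mult : {ffun 'I_n -> L} -> L) (V : set L) (I : eqType) (e : I -> L)
  (i0 i1 : 'I_n) : nat_of_ord i0 = 0%N -> nat_of_ord i1 = 1%N ->
  forall s a b rest,
  a_sig mult V e s (a :: b :: rest) = a_sig mult V e (s * tperm i0 i1)%g (b :: a :: rest).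
Proof.
move=> h0 h1 s a b rest.
rewrite /a_sig (prod_span_perm _ _ _ i0 i1).
have -> : ((fun p : 'I_n => u_of V e (nth None [:: a, b & rest] p)) \o tperm i0 i1)
   = (fun p : 'I_n => u_of V e (nth None [:: b, a & rest] p)).
  apply: funext => p /=; congr u_of.
  case: (eqVneq p i0) => [->|p0]; first by rewrite tpermL h0 h1.
  case: (eqVneq p i1) => [->|p1]; first by rewrite tpermR h0 h1.
  rewrite tpermD 1?eq_sym //.
  case: p p0 p1 => [[|[|p]] Hp] //= p0 p1.
  - by exfalso; move: p0; apply/negP/negPn/eqP/val_inj; rewrite /= h0.
  - by exfalso; move: p1; apply/negP/negPn/eqP/val_inj; rewrite /= h1.
by [].
Qed.

Theorem lemma3p3 (F : fieldType) (G : zmodType) (eps : G -> G -> F) (n : nat)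
  (L : lmodType F) (Lg : G -> set L) (mult : {ffun 'I_n -> L} -> L)
  (V W : set L) (I : eqType) (e : I -> L) :
  (2 <= n)%N -> bicharacter eps -> color_gLt eps Lg mult ->
  quasi_mult_basis Lg mult V W e ->
  forall (J : set (bsym I)) (X : bsym ((n.-1).-tuple (option I))) (i : I),
    J = bbar @` J ->
    (phi mult V e J X (Unb i) <->
     ((phi mult V e [set Unb i] (bbar X) `&` J `&` range Unb) <> set0 \/
      (phi mult V e [set Bar i] X `&` J `&` range Unb) <> set0)).
Proof.
move=> n2 _ _ [_ _ [_ VW] [[LI HW] _] _] J X i HJ.
have JUB : forall k, J (Unb k) -> J (Bar k).
  by move=> k Jk; rewrite HJ; exists (Unb k).
have JBU : forall k, J (Bar k) -> J (Unb k).
  by move=> k Jk; rewrite HJ; exists (Bar k).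
have AU := @a_uniq _ _ _ mult _ _ _ _ LI HW VW.
have As : forall s js r, a_sig mult V e s js r -> a_sig mult V e s js = [set r].
  move=> s js r h; apply/seteqP; split => x.
    by move=> hx; rewrite /set1 /= (AU _ _ _ _ hx h).
  by move=> ->.
have Ar : forall s js r, a_sig mult V e s js = [set r] -> a_sig mult V e s js r.
  by move=> s js r ->.
have i0 : (0 < n)%N by apply: ltn_trans n2.
pose o0 := Ordinal i0; pose o1 := Ordinal n2.
have Sw := @a_swap _ _ _ mult V _ e o0 o1 erefl erefl.
rewrite !ne0P.
case: X => js /=.
- split.
  + case=> -[j|j] [Jj /= H].
    * left; exists (Unb j); split; [split|by exists j] => //.
      exists (Unb i); split => //=.
      by case: H => s h; exists s; apply: As.
    * right; exists (Unb j); split; [split|by exists j]; last by apply: JBU.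
      exists (Bar i); split => //=.
      case: H => k [s h]; exists k, (s * tperm o0 o1)%g.
      by rewrite /b_sig /= -Sw.
  + move=> [[x [[Hp Jx] [k _ Ex]]]|[x [[Hp Jx] [k _ Ex]]]]; subst x; case: Hp => j0 [-> Hm].
    * exists (Unb k); split => //=.
      by case: Hm => s h; exists s; apply: Ar.
    * exists (Bar k); split; first by apply: JUB.
      case: Hm => k' [s h]; exists k', (s * tperm o0 o1)%g.
      by rewrite /b_sig /= -Sw.
- split.
  + case=> -[j|j] [Jj /= H]; last by case: H.
    left; exists (Unb j); split; [split|by exists j] => //.
    exists (Unb i); split => //=.
    by case: H => s h; exists s; apply: Ar.
  + move=> [[x [[Hp Jx] [k _ Ex]]]|[x [[Hp Jx] [k _ Ex]]]]; subst x; case: Hp => j0 [-> Hm]; last by case: Hm.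
    exists (Unb k); split => //=.
    by case: Hm => s h; exists s; apply: As.
Qed.
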